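(* Let $X,Y$ be real Hilbert spaces, $f:X\to\mathbb{R}$ convex and continuously differentiable, $A:X\to Y$ linear and continuous, $b\in Y$, and assume $S\times M\neq\emptyset$. Let $\varepsilon:[t_{0},+\infty[\ \to\ ]0,+\infty[$ be continuously differentiable with $\lim_{t\to+\infty}\varepsilon(t)=0$, and for each $t\geq t_0$ let $(x_t,\lambda_t)$ be the unique saddle point of $L_t$. Suppose that there exists $\alpha>0$ such that $\|T(x,\lambda)-T(\xi,\eta)\|^{2}\geq\alpha\|(x,\lambda)-(\xi,\eta)\|^{2}$ for all $(x,\lambda),(\xi,\eta)\in X\times Y$. Then, for $(\bar x,\bar\lambda)\in S\times M$, as $t\to+\infty$: \[ \|(x_t,\lambda_t)\|^2=\mathcal{O}\Big(\frac{1}{\alpha+\varepsilon^2(t)}\Big),\qquad \|(x_t,\lambda_t)-(\bar x,\bar\lambda)\|^2=\mathcal{O}\Big(\frac{\varepsilon^2(t)}{\alpha+\varepsilon^2(t)}\Big),\qquad \|(\dot x_t,\dot\lambda_t)\|^2=\mathcal{O}\bigg(\frac{|\dot\varepsilon(t)|^2}{(\alpha+\varepsilon^2(t))^2}\bigg), \] the last estimate holding along the (almost every) $t$ at which $t\mapsto(x_t,\lambda_t)$ is differentiable.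
   Context: $X\times Y$ carries the product inner product $\langle(x,\lambda),(\xi,\eta)\rangle=\langle x,\xi\rangle_X+\langle \lambda,\eta\rangle_Y$ and associated norm $\|\cdot\|$. The Lagrangian is $L(x,\lambda)=f(x)+\langle\lambda,Ax-b\rangle_Y$. $S$ is the set of optimal solutions of $\min\{f(x):Ax=b\}$ and $M\subset Y$ the set of associated Lagrange multipliers; $S\times M$ is exactly the set of saddle points of $L$, equivalently the zero set of the monotone operator $T:X\times Y\to X\times Y$, $T(x,\lambda)=(\nabla f(x)+A^*\lambda,\ b-Ax)$. For $t\ge t_0$, $L_t(x,\lambda)=L(x,\lambda)+\frac{\varepsilon(t)}{2}(\|x\|_X^2-\|\lambda\|_Y^2)$ has a unique saddle point $(x_t,\lambda_t)$, characterized by $T(x_t,\lambda_t)+\varepsilon(t)(x_t,\lambda_t)=0$. The map $t\mapsto(x_t,\lambda_t)$ is Lipschitz on compact intervals, hence differentiable a.e.; $(\dot x_t,\dot\lambda_t)$ denotes its derivative. *)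

(* Defs.v *)
From mathcomp Require Import all_boot all_order all_algebra.
From mathcomp Require Import all_classical all_reals all_analysis.
Set Implicit Arguments. Unset Strict Implicit. Unset Printing Implicit Defensive.
Import Order.TTheory GRing.Theory Num.Theory.
Import numFieldNormedType.Exports.
Local Open Scope classical_set_scope.
Local Open Scope ring_scope.

(* A real inner product on a normed module V whose induced norm is the norm
   of V.  A real Hilbert space is then a completeNormedModType R together with
   such an inner product. *)
Record inner_product (R : realType) (V : normedModType R) := InnerProduct {
  ip :> V -> V -> R;
  ip_sym : forall x y, ip x y = ip y x;
  ip_linl : forall (a : R) (x y z : V), ip (a *: x + y) z = a * ip x z + ip y z;
  ip_norm : forall x, ip x x = `|x| ^+ 2
}.

Definition convex_fun (R : realType) (X : normedModType R) (f : X -> R) :=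
  forall (x y : X) (s : R), 0 <= s <= 1 ->
    f ((1 - s) *: x + s *: y) <= (1 - s) * f x + s * f y.

Definition is_gradient (R : realType) (X : normedModType R)
  (ipX : inner_product X) (f : X -> R) (gradf : X -> X) :=
  forall x, differentiable f x /\ forall h, ('d f x : X -> R) h = ipX (gradf x) h.

Definition is_adjoint (R : realType) (X Y : normedModType R)
  (ipX : inner_product X) (ipY : inner_product Y) (A : X -> Y) (Astar : Y -> X) :=
  forall x l, ipX x (Astar l) = ipY (A x) l.

Definition prod_sqnorm (R : realType) (X Y : normedModType R) (x : X) (l : Y) : R :=
  `|x| ^+ 2 + `|l| ^+ 2.

Definition lagrangian (R : realType) (X Y : normedModType R)
  (ipY : inner_product Y) (f : X -> R) (A : X -> Y) (b : Y) (x : X) (l : Y) : R :=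
  f x + ipY l (A x - b).

Definition reg_lagrangian (R : realType) (X Y : normedModType R)
  (ipY : inner_product Y) (f : X -> R) (A : X -> Y) (b : Y) (e : R) (x : X) (l : Y) : R :=
  lagrangian ipY f A b x l + e / 2 * (`|x| ^+ 2 - `|l| ^+ 2).

Definition saddle_point (R : realType) (X Y : normedModType R)
  (Lag : X -> Y -> R) (xs : X) (ls : Y) :=
  forall x l, Lag xs l <= Lag xs ls /\ Lag xs ls <= Lag x ls.

Definition opt_sol (R : realType) (X Y : normedModType R)
  (f : X -> R) (A : X -> Y) (b : Y) : set X :=
  [set x | A x = b /\ forall y, A y = b -> f x <= f y].

Definition multipliers (R : realType) (X Y : normedModType R)
  (f : X -> R) (gradf : X -> X) (A : X -> Y) (Astar : Y -> X) (b : Y) : set Y :=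
  [set l | forall x, opt_sol f A b x -> gradf x + Astar l = 0].

(* Main.v *)
Set Warnings "-all".
Require Import Defs.
From mathcomp Require Import all_boot all_order all_algebra.
From mathcomp Require Import all_classical all_reals all_analysis.
From mathcomp Require Import ring lra.
Set Implicit Arguments. Unset Strict Implicit. Unset Printing Implicit Defensive.
Import Order.TTheory GRing.Theory Num.Theory.
Import numFieldNormedType.Exports.
Local Open Scope classical_set_scope.
Local Open Scope ring_scope.

Lemma ip0l (R : realType) (V : normedModType R) (ip : inner_product V) z : ip 0 z = 0.
Proof.
have := ip_linl ip 1 0 0 z; rewrite scaler0 addr0 mul1r => h; lra.
Qed.
Lemma ipDl (R : realType) (V : normedModType R) (ip : inner_product V) x y z :
  ip (x + y) z = ip x z + ip y z.
Proof. by have := ip_linl ip 1 x y z; rewrite scale1r mul1r. Qed.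
Lemma ipZl (R : realType) (V : normedModType R) (ip : inner_product V) a x z :
  ip (a *: x) z = a * ip x z.
Proof. by have := ip_linl ip a x 0 z; rewrite addr0 ip0l addr0. Qed.
Lemma ipNl (R : realType) (V : normedModType R) (ip : inner_product V) x z :
  ip (- x) z = - ip x z.
Proof. by rewrite -scaleN1r ipZl mulN1r. Qed.
Lemma ipBl (R : realType) (V : normedModType R) (ip : inner_product V) x y z :
  ip (x - y) z = ip x z - ip y z.
Proof. by rewrite ipDl ipNl. Qed.
Lemma ipDr (R : realType) (V : normedModType R) (ip : inner_product V) x y z :
  ip z (x + y) = ip z x + ip z y.
Proof. by rewrite ip_sym ipDl !(ip_sym ip _ z). Qed.
Lemma ipZr (R : realType) (V : normedModType R) (ip : inner_product V) a x z :
  ip z (a *: x) = a * ip z x.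
Proof. by rewrite ip_sym ipZl (ip_sym ip x). Qed.
Lemma ipNr (R : realType) (V : normedModType R) (ip : inner_product V) x z :
  ip z (- x) = - ip z x.
Proof. by rewrite ip_sym ipNl ip_sym. Qed.
Lemma ipBr (R : realType) (V : normedModType R) (ip : inner_product V) x y z :
  ip z (x - y) = ip z x - ip z y.
Proof. by rewrite ipDr ipNr. Qed.

Lemma sqnormD (R : realType) (V : normedModType R) (u v : V) :
  `|u + v| ^+ 2 <= 2 * `|u| ^+ 2 + 2 * `|v| ^+ 2.
Proof.
have h := ler_normD u v.
have h1 : `|u + v| ^+ 2 <= (`|u| + `|v|) ^+ 2.
  by rewrite lerXn2r ?nnegrE ?addr_ge0.
apply: (le_trans h1).
have := sqr_ge0 (`|u| - `|v|). rewrite !expr2. nra.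
Qed.

Lemma sqnormZ (R : realType) (V : normedModType R) a (u : V) :
  `|a *: u| ^+ 2 = a ^+ 2 * `|u| ^+ 2.
Proof. by rewrite normrZ exprMn real_normK ?num_real. Qed.

Lemma vec_id (R : realType) (V : normedModType R) (T1 T2 u1 u2 : V) e1 e2 :
  T1 + e1 *: u1 = 0 -> T2 + e2 *: u2 = 0 ->
  T1 - T2 = - (e1 *: (u1 - u2)) - (e1 - e2) *: u2.
Proof.
move=> /eqP; rewrite addr_eq0 => /eqP -> /eqP; rewrite addr_eq0 => /eqP ->.
rewrite scalerBr scalerBl !opprB opprK [RHS]addrC addrA subrK addrC //.
Qed.

Lemma vec_bound (R : realType) (V : normedModType R) (T1 T2 u1 u2 : V) e1 e2 :
  T1 + e1 *: u1 = 0 -> T2 + e2 *: u2 = 0 ->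
  `|T1 - T2| ^+ 2 <= 2 * (e1 ^+ 2 * `|u1 - u2| ^+ 2) + 2 * ((e1 - e2) ^+ 2 * `|u2| ^+ 2).
Proof.
move=> h1 h2; rewrite (vec_id h1 h2).
by apply: le_trans (sqnormD _ _) _; rewrite !normrN !sqnormZ.
Qed.

Lemma core (R : realType) (X Y : normedModType R) (gradf : X -> X) (Astar : Y -> X)
  (A : X -> Y) (b : Y) (alpha : R)
  (Hs : forall x xi l eta, prod_sqnorm ((gradf x + Astar l) - (gradf xi + Astar eta))
     ((b - A x) - (b - A xi)) >= alpha * prod_sqnorm (x - xi) (l - eta))
  x1 l1 e1 x2 l2 e2 :
  0 < alpha -> 4 * e1 ^+ 2 <= alpha ->
  gradf x1 + Astar l1 + e1 *: x1 = 0 -> b - A x1 + e1 *: l1 = 0 ->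
  gradf x2 + Astar l2 + e2 *: x2 = 0 -> b - A x2 + e2 *: l2 = 0 ->
  prod_sqnorm (x1 - x2) (l1 - l2) <= 4 * (e1 - e2) ^+ 2 * prod_sqnorm x2 l2 / alpha.
Proof.
move=> a0 ea h1 h2 h3 h4.
have H := Hs x1 x2 l1 l2.
have B1 := vec_bound h1 h3.
have B2 := vec_bound h2 h4.
move: H; rewrite /prod_sqnorm => H.
rewrite ler_pdivlMr //.
set p1 := `|x1 - x2| ^+ 2 in H B1 *.
set p2 := `|l1 - l2| ^+ 2 in H B2 *.
set q1 := `|x2| ^+ 2 in B1 *.
set q2 := `|l2| ^+ 2 in B2 *.
have p10 : 0 <= p1 by rewrite sqr_ge0.
have p20 : 0 <= p2 by rewrite sqr_ge0.
have k : 0 <= (alpha - 4 * e1 ^+ 2) * (p1 + p2) by rewrite mulr_ge0 ?subr_ge0 ?addr_ge0.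
nra.
Qed.

Lemma foc_l_aux (R : realType) (Y : normedModType R) (ipY : inner_product Y)
  (w l : Y) (e : R) : 0 < e ->
  (forall l', ipY l' w - e / 2 * ipY l' l' <= ipY l w - e / 2 * ipY l l) ->
  w - e *: l = 0.
Proof.
move=> e0 H.
set k := w - e *: l.
set s := e^-1.
have Kk : ipY k k = ipY k w - e * ipY k l by rewrite {2}/k ipBr ipZr.
have es : e * s = 1 by rewrite /s mulfV ?gt_eqF.
have s0 : 0 < s by rewrite /s invr_gt0.
have := H (l + s *: k).
clearbody k s.
rewrite !(ipDl, ipZl, ipDr, ipZr) (ip_sym ipY l k) => H1.
have H2 : s * ipY k k / 2 <= 0.
  have -> : s * ipY k k / 2 = s * ipY k k / 2 + s * ipY k k / 2 * (1 - e * s).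
    by rewrite es subrr mulr0 addr0.
  rewrite Kk; rewrite Kk in H1; lra.
have H3 : ipY k k <= 0.
  move: H2; rewrite -mulrA pmulr_rle0 // pmulr_lle0 //.
move: H3; rewrite ip_norm => H3.
have : `|k| ^+ 2 = 0 by apply/eqP; rewrite eq_le H3 sqr_ge0.
by move/eqP; rewrite sqrf_eq0 normr_eq0 => /eqP.
Qed.

Lemma foc_l (R : realType) (X Y : normedModType R) (ipY : inner_product Y)
  (f : X -> R) (A : X -> Y) (b : Y) (e : R) (x : X) (l : Y) :
  0 < e ->
  (forall l', reg_lagrangian ipY f A b e x l' <= reg_lagrangian ipY f A b e x l) ->
  b - A x + e *: l = 0.
Proof.
move=> e0 H.
have := foc_l_aux (ipY := ipY) (w := A x - b) (l := l) e0.
have -> : b - A x + e *: l = - (A x - b - e *: l) by rewrite !opprB addrC.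
move=> ->; first by rewrite oppr0.
move=> l'; have := H l'.
by rewrite /reg_lagrangian /lagrangian -!(ip_norm ipY); lra.
Qed.


Lemma onesided (R : realType) (X : normedModType R) (f : X -> R) (x h : X) (a c : R) :
  derivable f x h ->
  (forall s, 0 < s -> a - s * c <= s^-1 * (f (s *: h + x) - f x)) ->
  a <= 'D_h f x.
Proof.
move=> df H.
have g0 : (fun s : R => a - s * c) @ (0:R)^'+ --> a.
  apply: cvg_at_right_filter.
  have : (fun s : R => a - s * c) @ (0:R) --> a - 0 * c.
    apply: cvgB; first exact: cvg_cst.
    apply: cvgMl; exact: cvg_id.
  by rewrite mul0r subr0.
apply: (ler_cvg_to g0 (cvg_dnbhs_at_right df)).
near=> s.
rewrite /=; apply: H.
near: s; exact: nbhs_right_gt.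
Unshelve. all: by end_near.
Qed.

Lemma foc_x (R : realType) (X Y : normedModType R) (ipX : inner_product X)
  (ipY : inner_product Y) (f : X -> R) (gradf : X -> X) (A : {linear X -> Y})
  (Astar : Y -> X) (b : Y) (e : R) (x : X) (l : Y) :
  is_gradient ipX f gradf -> is_adjoint ipX ipY A Astar ->
  (forall x', reg_lagrangian ipY f A b e x l <= reg_lagrangian ipY f A b e x' l) ->
  gradf x + Astar l + e *: x = 0.
Proof.
move=> Hg Hadj H.
set g := gradf x + Astar l + e *: x.
have key : forall h, 0 <= ipX g h.
  move=> h; have [dfx dfE] := Hg x.
  have : - (ipY l (A h) + e * ipX x h) <= 'D_h f x.
    apply: (@onesided _ _ _ _ _ _ (e / 2 * ipX h h)); first exact: diff_derivable.
    move=> s s0.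
    have := H (s *: h + x).
    rewrite /reg_lagrangian /lagrangian linearD -!(ip_norm ipX).
    have -> : A (s *: h) = s *: A h by rewrite linearZ.
    rewrite !(ipDl ipX, ipZl ipX, ipDr ipX, ipZr ipX, ipDr ipY, ipZr ipY, ipBr ipY) (ip_sym ipX h x) => H1.
    rewrite ler_pdivlMl //; lra.
  rewrite (deriveE h dfx) dfE -(ip_sym ipY (A h)) -Hadj (ip_sym ipX h) => H2.
  rewrite /g !(ipDl, ipZl); lra.
have := key (- g); rewrite ipNr oppr_ge0 ip_norm => H3.
have : `|g| ^+ 2 = 0 by apply/eqP; rewrite eq_le H3 sqr_ge0.
by move/eqP; rewrite sqrf_eq0 normr_eq0 => /eqP.
Qed.

Lemma der1_cvg (R : realType) (V : normedModType R) (g : R -> V) t :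
  derivable g t 1 -> (fun h => h^-1 *: (g (h + t) - g t)) @ (0:R)^' --> derive1 g t.
Proof.
move=> d; rewrite derive1E.
have -> : (fun h => h^-1 *: (g (h + t) - g t)) =
          (fun h => h^-1 *: ((g \o shift t) (h *: 1) - g t)).
  by apply/funext => h /=; rewrite [h *: 1]mulr1.
exact: d.
Qed.

Lemma cvg_sq (R : realType) (V : normedModType R) (q : R -> V) (l : V) :
  q @ (0:R)^' --> l -> (fun h => `|q h| ^+ 2) @ (0:R)^' --> `|l| ^+ 2.
Proof.
move=> c; have cn := @cvg_norm _ _ _ _ (dnbhs_filter (0:R)) _ _ c.
have -> : (fun h => `|q h| ^+ 2) = ((fun h => `|q h|) \* (fun h => `|q h|)).
  by apply/funext => h /=; rewrite expr2.
rewrite expr2; exact: (cvgM cn cn).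
Qed.

Lemma cvg_sqR (R : realType) (q : R -> R) (l : R) :
  q @ (0:R)^' --> l -> (fun h => q h ^+ 2) @ (0:R)^' --> l ^+ 2.
Proof.
move=> c.
have -> : (fun h => q h ^+ 2) = (q \* q) by apply/funext => h /=; rewrite expr2.
rewrite expr2; exact: (cvgM c c).
Qed.

Unset Implicit Arguments.

Theorem lemma2p7 (R : realType) (X Y : completeNormedModType R)
  (ipX : inner_product X) (ipY : inner_product Y)
  (f : X -> R) (gradf : X -> X) (A : {linear X -> Y}) (Astar : Y -> X) (b : Y)
  (t0 : R) (eps : R -> R) (xt : R -> X) (lt : R -> Y) (alpha : R)
  (xbar : X) (lbar : Y) :
  convex_fun f ->
  is_gradient ipX f gradf -> continuous gradf ->
  continuous A ->
  is_adjoint ipX ipY A Astar ->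
  (exists x l, opt_sol f A b x /\ multipliers f gradf A Astar b l) ->
  (forall t, t0 <= t -> 0 < eps t) ->
  (forall t, t0 < t -> derivable eps t 1) ->
  {in `]t0, +oo[, continuous (derive1 eps)} ->
  eps @ +oo --> 0 ->
  (forall t, t0 <= t ->
     saddle_point (reg_lagrangian ipY f A b (eps t)) (xt t) (lt t)) ->
  0 < alpha ->
  (forall (x xi : X) (l eta : Y),
     prod_sqnorm ((gradf x + Astar l) - (gradf xi + Astar eta))
                 ((b - A x) - (b - A xi))
       >= alpha * prod_sqnorm (x - xi) (l - eta)) ->
  opt_sol f A b xbar -> multipliers f gradf A Astar b lbar ->
  (exists C T1, forall t, T1 <= t ->
     prod_sqnorm (xt t) (lt t) <= C / (alpha + eps t ^+ 2)) /\
  (exists C T1, forall t, T1 <= t ->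
     prod_sqnorm (xt t - xbar) (lt t - lbar)
       <= C * (eps t ^+ 2 / (alpha + eps t ^+ 2))) /\
  (exists C T1, forall t, T1 <= t ->
     derivable xt t 1 -> derivable lt t 1 ->
     prod_sqnorm (derive1 xt t) (derive1 lt t)
       <= C * (`|derive1 eps t| ^+ 2 / (alpha + eps t ^+ 2) ^+ 2)).
Proof.
move=> Hconv Hg Hgc HAc Hadj Hex Heps Hder Hcont Hlim Hsad Ha Hs Hxbar Hlbar.
have foc : forall t, t0 <= t ->
  gradf (xt t) + Astar (lt t) + eps t *: xt t = 0 /\ b - A (xt t) + eps t *: lt t = 0.
  move=> t ht; split.
    apply: (foc_x Hg Hadj) => x'; exact: (Hsad t ht x' (lt t)).2.
  apply: (foc_l (Heps t ht)) => l'; exact: (Hsad t ht (xt t) l').1.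
have bar1 : gradf xbar + Astar lbar + 0 *: xbar = 0.
  by rewrite scale0r addr0; exact: Hlbar _ Hxbar.
have bar2 : b - A xbar + 0 *: lbar = 0 by rewrite scale0r addr0 Hxbar.1 subrr.
set Q := prod_sqnorm xbar lbar.
have Q0 : 0 <= Q by rewrite /Q /prod_sqnorm addr_ge0 ?sqr_ge0.
set m := Num.min 1 (alpha / 4).
have m0 : 0 < m by rewrite lt_min ltr01 divr_gt0.
have [M [Mreal HM]] := cvgr_dist_le _ _ Hlim _ m0.
have good : forall t, M < t -> t0 < t ->
    [/\ 0 < eps t, eps t <= 1 & 4 * eps t ^+ 2 <= alpha].
  move=> t Mt t0t; have e0 := Heps t (ltW t0t).
  have := HM t Mt; rewrite sub0r normrN (ger0_norm (ltW e0)) /m le_min => /andP[e1 e2].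
  split => //; nra.
set K := 4 * Q / alpha.
have K0 : 0 <= K by apply: divr_ge0; [apply: mulr_ge0 | exact: ltW].
have B2 : forall t, M < t -> t0 < t ->
    prod_sqnorm (xt t - xbar) (lt t - lbar) <= K * eps t ^+ 2.
  move=> t Mt t0t; have [e0 e1 e2] := good t Mt t0t.
  have [f1 f2] := foc t (ltW t0t).
  have := core Hs Ha e2 f1 f2 bar1 bar2.
  rewrite subr0 -/Q /K => H; apply: (le_trans H); lra.
set K1 := 2 * K + 2 * Q.
have K10 : 0 <= K1 by rewrite /K1; apply: addr_ge0; apply: mulr_ge0.
have B1 : forall t, M < t -> t0 < t -> prod_sqnorm (xt t) (lt t) <= K1.
  move=> t Mt t0t; have [e0 e1 e2] := good t Mt t0t.
  have H := B2 t Mt t0t.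
  have S1 := sqnormD (xt t - xbar) xbar.
  have S2 := sqnormD (lt t - lbar) lbar.
  rewrite !subrK in S1 S2.
  have e3 : eps t ^+ 2 <= 1 by nra.
  have h1 : 0 <= K * (1 - eps t ^+ 2) by rewrite mulr_ge0 // subr_ge0.
  move: H; rewrite /K1 /Q /prod_sqnorm => H; lra.
set T1 := Num.max (M + 1) (t0 + 1).
have gT : forall t, T1 <= t -> M < t /\ t0 < t.
  move=> t; rewrite /T1 ge_max => /andP[h1 h2]; split; lra.
split.
  exists (K1 * (alpha + 1)), T1 => t /gT [Mt t0t].
  have [e0 e1 e2] := good t Mt t0t.
  have H := B1 t Mt t0t.
  have P0 : 0 <= prod_sqnorm (xt t) (lt t) by rewrite addr_ge0 ?sqr_ge0.
  rewrite ler_pdivlMr; last by rewrite ltr_wpDr ?sqr_ge0.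
  have e3 : eps t ^+ 2 <= 1 by nra.
  have h1 : 0 <= (K1 - prod_sqnorm (xt t) (lt t)) * (alpha + eps t ^+ 2).
    by rewrite mulr_ge0 ?subr_ge0 // addr_ge0 ?sqr_ge0 ?ltW.
  have h2 : 0 <= K1 * (1 - eps t ^+ 2) by rewrite mulr_ge0 // subr_ge0.
  lra.
split.
  exists (K * (alpha + 1)), T1 => t /gT [Mt t0t].
  have [e0 e1 e2] := good t Mt t0t.
  have H := B2 t Mt t0t.
  rewrite mulrA ler_pdivlMr; last by rewrite ltr_wpDr ?sqr_ge0.
  have e3 : eps t ^+ 2 <= 1 by nra.
  have h1 : 0 <= (K * eps t ^+ 2 - prod_sqnorm (xt t - xbar) (lt t - lbar))
                   * (alpha + eps t ^+ 2).
    by rewrite mulr_ge0 ?subr_ge0 // addr_ge0 ?sqr_ge0 ?ltW.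
  have h2 : 0 <= K * eps t ^+ 2 * (1 - eps t ^+ 2).
    by apply: mulr_ge0; [apply: mulr_ge0; rewrite ?sqr_ge0 | rewrite subr_ge0].
  lra.
exists (4 * K1 / alpha * (alpha + 1) ^+ 2), (T1 + 1) => t tT dx dl.
have hT : T1 <= t - 1 by lra.
have [Mt t0t] := gT _ hT.
have t0t' : t0 < t by lra.
have Mt' : M < t by lra.
set k := 4 * K1 / alpha.
have k0 : 0 <= k by rewrite /k; apply: divr_ge0; [apply: mulr_ge0 | exact: ltW].
have key : prod_sqnorm (derive1 xt t) (derive1 lt t) <= k * (derive1 eps t) ^+ 2.
  have cx := cvg_sq (der1_cvg dx).
  have cl := cvg_sq (der1_cvg dl).
  have ce := cvg_sqR (der1_cvg (Hder t t0t')).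
  have FF : Filter (0:R)^' := dnbhs_filter 0.
  have cL : (fun h => `|h^-1 *: (xt (h + t) - xt t)| ^+ 2 +
                      `|h^-1 *: (lt (h + t) - lt t)| ^+ 2) @ (0:R)^' -->
            `|derive1 xt t| ^+ 2 + `|derive1 lt t| ^+ 2 by apply: cvgD.
  have cR : (fun h => k * (h^-1 *: (eps (h + t) - eps t)) ^+ 2) @ (0:R)^' -->
            k * (derive1 eps t) ^+ 2 by apply: cvgMl_tmp.
  have PF : ProperFilter (0:R)^' := Proper_dnbhs_numFieldType 0.
  apply: (ler_cvg_to cL cR).
  near=> h.
  have hb : `|h| < 1.
    near: h. exists 1 => //= y /=.
    by rewrite sub0r normrN.
  have [hl hr] : -1 < h /\ h < 1 by move: hb; rewrite ltr_norml => /andP[].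
  have Mh : M < h + t by lra.
  have th : t0 < h + t by lra.
  have [e0 e1 e2] := good (h + t) Mh th.
  have [f1 f2] := foc (h + t) (ltW th).
  have [g1 g2] := foc t (ltW t0t').
  have H := core Hs Ha e2 f1 f2 g1 g2.
  have Bt := B1 t Mt' t0t'.
  rewrite !sqnormZ.
  change (h^-1 *: (eps (h + t) - eps t)) with (h^-1 * (eps (h + t) - eps t)).
  rewrite exprMn.
  move: H Bt; rewrite /prod_sqnorm /k.
  set p1 := `|xt (h + t) - xt t| ^+ 2.
  set p2 := `|lt (h + t) - lt t| ^+ 2.
  set d := (eps (h + t) - eps t) ^+ 2.
  set Pt := `|xt t| ^+ 2 + `|lt t| ^+ 2.
  set ai := alpha^-1.
  set hi := h^-1 ^+ 2.
  move=> H Bt.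
  have d0 : 0 <= d by rewrite sqr_ge0.
  have ai0 : 0 <= ai by rewrite invr_ge0 ltW.
  have hi0 : 0 <= hi by rewrite sqr_ge0.
  have hk : 0 <= (K1 - Pt) * (4 * d * ai).
    by apply: mulr_ge0; [rewrite subr_ge0 | apply: mulr_ge0 => //; apply: mulr_ge0].
  have H' : p1 + p2 <= 4 * K1 * ai * d by lra.
  have hh : 0 <= (4 * K1 * ai * d - (p1 + p2)) * hi.
    by apply: mulr_ge0 => //; rewrite subr_ge0.
  lra.
have [e0 e1 e2] := good t Mt' t0t'.
rewrite real_normK ?num_real // mulrA ler_pdivlMr; last first.
  by rewrite exprn_gt0 // ltr_wpDr ?sqr_ge0.
set D := (alpha + eps t ^+ 2) ^+ 2.
set D1 := (alpha + 1) ^+ 2.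
set P := prod_sqnorm _ _ in key *.
set e' := derive1 eps t ^+ 2 in key *.
have e3 : eps t ^+ 2 <= 1 by nra.
have hD : D <= D1.
  have s0 : 0 <= eps t ^+ 2 by rewrite sqr_ge0.
  rewrite /D /D1 !expr2; apply: ler_pM; lra.
have P0 : 0 <= P by rewrite /P addr_ge0 ?sqr_ge0.
have D0 : 0 <= D by rewrite sqr_ge0.
have ee : 0 <= e' by rewrite sqr_ge0.
have h1 : 0 <= (k * e' - P) * D by apply: mulr_ge0 => //; rewrite subr_ge0.
have h2 : 0 <= k * e' * (D1 - D).
  apply: mulr_ge0; first exact: mulr_ge0.
  by rewrite subr_ge0.
lra.
Unshelve. all: by end_near.
Qed.
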